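(* Let $G$ be a very well-covered graph with $V(G)=\{x_1,\ldots,x_h,y_1,\ldots,y_h\}$ such that $\{x_1,\ldots,x_h\}$ is a minimal vertex cover, $\{y_1,\ldots,y_h\}$ a maximal independent set and $\{x_i,y_i\}\in E(G)$ for all $i$. Let $s\ge1$, $e_1,\ldots,e_s\in E(G)$, and let $G'$ be the graph associated to $(I(G)^{s+1}:e_1\cdots e_s)$ as in the context. Let $y\in V(G)$ and $H=G\setminus N_G[y]$. If $\{e_1,\ldots,e_s\}\cap E(H)=\{e_{i_1},\ldots,e_{i_t}\}$ and $H'$ is the graph associated (in the same way) to $(I(H)^{t+1}:e_{i_1}\cdots e_{i_t})$, then $G'\setminus N_{G'}[y]$ is an induced subgraph of $H'$. In particular $\operatorname{reg}(I(G'\setminus N_{G'}[y]))\le\operatorname{reg}(I(H'))$.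
   Context: $N_G[y]$ is the closed neighbourhood of $y$; for $U\subseteq V(G)$, $G\setminus U$ is the induced subgraph on $V(G)\setminus U$. $I(\cdot)$ is the edge ideal; edges are identified with the products of their endpoints; $\operatorname{reg}$ is Castelnuovo–Mumford regularity. $G$ is very well-covered if it has no isolated vertices, all minimal vertex covers have the same size, and this size is $|V(G)|/2$. Even-connection: a sequence $p_0p_1\cdots p_{2k+1}$, $k\ge1$, with $\{p_r,p_{r+1}\}\in E(G)$ for all $r$, each $\{p_{2\ell+1},p_{2\ell+2}\}$ ($0\le\ell\le k-1$) equal to some $e_m$, each edge used among these at most as many times as it appears in $e_1,\dots,e_s$; then $p_0,p_{2k+1}$ (possibly equal) are even-connected. $(I(G)^{s+1}:e_1\cdots e_s)$ is minimally generated by $uv$ with $\{u,v\}\in E(G)$ or $u,v$ even-connected; the graph associated to it is the graph whose edge ideal is the polarization of this ideal (each generator $u^2$ replaced by $uu^*$ with a new vertex $u^*$). *)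

(* Defs.v *)
From mathcomp Require Import all_boot.
Set Implicit Arguments. Unset Strict Implicit. Unset Printing Implicit Defensive.

(* Simple graphs: a symmetric irreflexive boolean relation on a finType T;
   the vertex set of such a graph G is all of T. *)
Definition simple_graph (T : finType) (E : rel T) := symmetric E /\ irreflexive E.

Definition vertex_cover (T : finType) (E : rel T) (C : {set T}) :=
  forall u v, E u v -> (u \in C) || (v \in C).

Definition min_vertex_cover (T : finType) (E : rel T) (C : {set T}) :=
  vertex_cover E C /\ forall D : {set T}, D \proper C -> ~ vertex_cover E D.

Definition independent (T : finType) (E : rel T) (S : {set T}) :=
  forall u v, u \in S -> v \in S -> ~~ E u v.

Definition max_independent (T : finType) (E : rel T) (S : {set T}) :=
  independent E S /\ forall S' : {set T}, S \proper S' -> ~ independent E S'.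

Definition very_well_covered (T : finType) (E : rel T) :=
  (forall u, exists v, E u v) /\
  forall C : {set T}, min_vertex_cover E C -> (#|C| * 2 = #|T|)%N.

Definition cnbhd (T : finType) (E : rel T) (y : T) : pred T :=
  fun u => (u == y) || E y u.

Definition del_cnbhd (T : finType) (E : rel T) (y : T) : rel T :=
  fun a b => [&& E a b, ~~ cnbhd E y a & ~~ cnbhd E y b].

Definition sameEdge (T : eqType) (p q : T * T) : bool :=
  ((p.1 == q.1) && (p.2 == q.2)) || ((p.1 == q.2) && (p.2 == q.1)).

(* u, v even-connected in E with respect to the (multi)list of edges es:
   a walk p_0 p_1 ... p_{2k+1} (k >= 1) with p_0 = u, p_{2k+1} = v,
   consecutive vertices adjacent, every {p_{2l+1}, p_{2l+2}} (l < k) one of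
   the edges in es, each edge used at most as often as it occurs in es. *)
Definition even_connected (T : finType) (E : rel T) (es : seq (T * T)) (u v : T) : Prop :=
  exists (p : seq T) (k : nat),
    [/\ (1 <= k)%N, size p = (2 * k + 2)%N,
        nth u p 0 = u, nth u p (2 * k + 1) = v &
        [/\ forall r, (r < 2 * k + 1)%N -> E (nth u p r) (nth u p r.+1),
            forall l, (l < k)%N ->
              has (sameEdge (nth u p (2 * l + 1), nth u p (2 * l + 2))) es &
            forall f : T * T,
              (count (sameEdge f)
                 [seq (nth u p (2 * l + 1), nth u p (2 * l + 2)) | l <- iota 0 k]
               <= count (sameEdge f) es)%N]].

(* The graph associated to (I(E)^{s+1} : e_1 ... e_s) (es = [:: e_1; ...; e_s]):
   the graph of the polarization.  Vertices are T + T: inl u is the original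
   vertex u, inr u is the new polarization vertex u^* (relevant only when u^2
   is a generator, i.e. u is even-connected to itself). *)
Definition assoc_graph (T : finType) (E : rel T) (es : seq (T * T)) :
    T + T -> T + T -> Prop :=
  fun a b => match a, b with
  | inl u, inl v => u <> v /\ (E u v \/ even_connected E es u v)
  | inl u, inr v => u = v /\ even_connected E es u u
  | inr u, inl v => u = v /\ even_connected E es u u
  | inr _, inr _ => False
  end.

Definition del_cnbhdP (X : Type) (R : X -> X -> Prop) (y : X) : X -> X -> Prop :=
  fun a b => R a b /\ (a <> y /\ ~ R y a) /\ (b <> y /\ ~ R y b).

(* K is an induced subgraph of L, graphs being identified with their edge
   sets (edge ideals), i.e. vertex set = non-isolated vertices:
   every edge of K is an edge of L, and any edge of L between two
   vertices of K is an edge of K. *)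
Definition induced_sub (X : Type) (K L : X -> X -> Prop) :=
  (forall a b, K a b -> L a b) /\
  (forall a b, (exists c, K a c) -> (exists c, K b c) -> L a b -> K a b).

(* Main.v *)
Require Import Defs.
From mathcomp Require Import all_boot.
From mathcomp Require Import zify.

Section S.
Variable T : finType.
Implicit Types (E : rel T) (es : seq (T*T)).

Definition pr (x0:T) (p : seq T) (l : nat) := (nth x0 p (2*l+1), nth x0 p (2*l+2)).

Definition wk E es (p : seq T) k x0 :=
  [/\ (1 <= k)%N, size p = (2*k+2)%N,
      forall r, (r < 2*k+1)%N -> E (nth x0 p r) (nth x0 p r.+1),
      forall l, (l < k)%N -> has (sameEdge (pr x0 p l)) es &
      forall f, (count (sameEdge f) [seq pr x0 p l | l <- iota 0 k] <= count (sameEdge f) es)%N].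

Lemma ecP E es u v : even_connected E es u v <->
  exists p k, [/\ wk E es p k u, nth u p 0 = u & nth u p (2*k+1) = v].
Proof.
split.
  by case=> p [k [h1 h2 h3 h4 [h5 h6 h7]]]; exists p, k; split.
by case=> p [k [[h1 h2 h5 h6 h7] h3 h4]]; exists p, k; split.
Qed.

Lemma wk_def E es p k x0 x1 : wk E es p k x0 -> wk E es p k x1.
Proof.
case=> h1 h2 h3 h4 h5.
have N i : (i < 2*k+2)%N -> nth x0 p i = nth x1 p i.
  by move=> hi; apply: set_nth_default; rewrite h2.
have P l : (l < k)%N -> pr x0 p l = pr x1 p l.
  by move=> hl; rewrite /pr !N //; lia.
split=> //.
- by move=> r hr; rewrite -!N //; [apply: h3 | lia | lia].
- by move=> l hl; rewrite -P //; apply: h4.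
- move=> f.
  have -> : [seq pr x1 p l | l <- iota 0 k] = [seq pr x0 p l | l <- iota 0 k].
    by apply/eq_in_map => l; rewrite mem_iota => /andP[_ hl]; rewrite P.
  exact: h5.
Qed.

Lemma sameEdge_swapr (f : T * T) a b : sameEdge f (a,b) = sameEdge f (b,a).
Proof. by rewrite /sameEdge /=; case: (f.1 == a); case: (f.2 == b); case: (f.1 == b); case: (f.2 == a). Qed.

Lemma sameEdge_swapl (f : T * T) a b : sameEdge (a,b) f = sameEdge (b,a) f.
Proof. by rewrite /sameEdge /=; case: (a == f.1); case: (b == f.2); case: (b == f.1); case: (a == f.2). Qed.

Lemma map_iota_rev (X : Type) (F : nat -> X) k :
  [seq F (k - l.+1) | l <- iota 0 k] = rev [seq F l | l <- iota 0 k].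
Proof.
elim: k F => [|k IH] F //.
have e1 : iota 0 k.+1 = iota 0 k ++ [:: k] by rewrite -addn1 iotaD.
have e2 : iota 0 k.+1 = 0 :: map S (iota 0 k).
  by rewrite /= -[1]/(1+0) iotaDl; congr cons; apply: eq_map => l; rewrite add1n.
rewrite [in LHS]e2 [in RHS]e1 map_cat rev_cat /= subSS subn0 -map_comp.
by rewrite -IH; congr cons; apply: eq_map => l /=; rewrite subSS.
Qed.

Lemma wk_rev E es p k x0 : symmetric E -> wk E es p k x0 ->
  wk E es (rev p) k x0 /\ forall i, (i < 2*k+2)%N -> nth x0 (rev p) i = nth x0 p (2*k+1 - i).
Proof.
move=> sE [h1 h2 h3 h4 h5].
have R i : (i < 2*k+2)%N -> nth x0 (rev p) i = nth x0 p (2*k+1 - i).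
  by move=> hi; rewrite nth_rev h2 //; congr nth; lia.
have P l : (l < k)%N -> pr x0 (rev p) l = ((pr x0 p (k - l.+1)).2, (pr x0 p (k - l.+1)).1).
  move=> hl; rewrite /pr /= !R; try lia.
  by congr pair; congr nth; lia.
split=> //; split=> //.
- by rewrite size_rev.
- move=> r hr; rewrite !R; try lia.
  rewrite sE; have -> : (2 * k + 1 - r = (2*k+1 - r.+1).+1)%N by lia.
  apply: h3; lia.
- move=> l hl; rewrite P //.
  have := h4 (k - l.+1) ltac:(lia).
  by apply: sub_has => e; case: (pr x0 p _) => a b /=; rewrite sameEdge_swapl.
- move=> f.
  have -> : [seq pr x0 (rev p) l | l <- iota 0 k] = [seq ((pr x0 p (k - l.+1)).2, (pr x0 p (k - l.+1)).1) | l <- iota 0 k].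
    by apply/eq_in_map => l; rewrite mem_iota => /andP[_ hl]; rewrite P.
  rewrite (@map_iota_rev _ (fun l => ((pr x0 p l).2, (pr x0 p l).1))) count_rev.
  rewrite count_map (eq_count (a2 := preim (pr x0 p) (sameEdge f))); last first.
    by move=> l; rewrite /= /pr /= sameEdge_swapr.
  by rewrite -count_map; apply: h5.
Qed.

Lemma KL E es p k x0 y t : wk E es p k x0 -> (t <= k)%N -> E y (nth x0 p (2*t+1)) ->
  E y (nth x0 p (2*k+1)) \/ even_connected E es y (nth x0 p (2*k+1)).
Proof.
move=> [h1 h2 h3 h4 h5] htk hy.
case: (ltngtP t k) htk => // [htk _|<- _]; last by left.
right; apply/ecP.
set m := (2*t+1)%N.
set q := y :: drop m p.
have Q i : nth x0 q i.+1 = nth x0 p (m + i) by rewrite /= nth_drop.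
have Pq l : pr x0 q l = pr x0 p (t + l).
  rewrite /pr; have -> : (2*l+1 = (2*l).+1)%N by lia.
  have -> : (2*l+2 = (2*l+1).+1)%N by lia.
  by rewrite !Q; congr pair; congr nth; rewrite /m; lia.
exists q, (k - t)%N; split; last first.
- rewrite addn1 /q /= nth_drop (set_nth_default x0); last by rewrite h2 /m; lia.
  congr nth; rewrite /m; lia.
- by [].
apply: (@wk_def _ _ _ _ x0); split.
- lia.
- by rewrite /q /= size_drop h2 /m; lia.
- move=> [|r] hr; first by rewrite /= nth_drop addn0.
  rewrite !Q; have -> : (m + r.+1 = (m + r).+1)%N by lia.
  apply: h3; rewrite /m; lia.
- by move=> l hl; rewrite Pq; apply: h4; lia.
- move=> f.
  have -> : [seq pr x0 q l | l <- iota 0 (k - t)] = [seq pr x0 p l | l <- iota t (k - t)].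
    have -> : iota t (k - t) = map (addn t) (iota 0 (k - t)) by rewrite -iotaDl addn0.
    rewrite -map_comp.
    by apply: eq_map => l /=; rewrite Pq.
  apply: leq_trans (h5 f).
  have -> : iota 0 k = iota 0 t ++ iota t (k - t).
    by rewrite -{1}(subnKC (ltnW htk)) iotaD.
  by rewrite map_cat count_cat leq_addl.
Qed.

Lemma NK0 E es p k x0 y j : wk E es p k x0 -> (j <= 2*k+1)%N ->
  (~~ odd j && (nth x0 p j == y)) || (odd j && E y (nth x0 p j)) ->
  nth x0 p 0 = y \/ E y (nth x0 p (2*k+1)) \/ even_connected E es y (nth x0 p (2*k+1)).
Proof.
move=> W hj; have [h1 h2 h3 h4 h5] := W.
have hjd : j = (j./2.*2 + odd j)%N by rewrite addnC odd_double_half.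
case hodd: (odd j) hjd => /= hjd.
  move=> hy; right; apply: (KL _ _ _ _ _ _ j./2 W); first lia.
  by have -> : (2 * j./2 + 1 = j)%N by lia.
rewrite orbF => /eqP hy.
have [j0|jpos] := posnP j.
  by left; rewrite j0 in hy.
right; apply: (KL _ _ _ _ _ _ j./2 W); first lia.
have -> : (2 * j./2 + 1 = j.+1)%N by lia.
by rewrite -hy; apply: h3; lia.
Qed.

Lemma avoid E es p k x0 y : symmetric E -> wk E es p k x0 ->
  ~ (nth x0 p 0 = y \/ E y (nth x0 p 0) \/ even_connected E es y (nth x0 p 0)) ->
  ~ (nth x0 p (2*k+1) = y \/ E y (nth x0 p (2*k+1)) \/ even_connected E es y (nth x0 p (2*k+1))) ->
  forall j, (j <= 2*k+1)%N -> ~~ cnbhd E y (nth x0 p j).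
Proof.
move=> sE W Ha Hb j hj; apply/negP => /orP hc.
have [Wr Rn] := wk_rev _ _ _ _ _ sE W.
have [h1 h2 _ _ _] := W.
have ra : nth x0 (rev p) (2*k+1) = nth x0 p 0 by rewrite Rn ?subnn //; lia.
have rb : nth x0 (rev p) 0 = nth x0 p (2*k+1) by rewrite Rn ?subn0 //; lia.
have rj : nth x0 (rev p) (2*k+1 - j) = nth x0 p j by rewrite Rn; [congr nth|]; lia.
case: hc => hc.
- case ho: (odd j).
  + have := NK0 _ _ _ _ _ y (2*k+1-j)%N Wr ltac:(lia).
    rewrite rj ra rb hc.
    have -> : odd (2*k+1-j) = false.
      by apply/negbTE; rewrite oddB ?ho ?oddD ?oddM //; lia.
    move=> /(_ isT) [/esym|[]] X; [by apply: Hb; left| by apply: Ha; right; left| by apply: Ha; right; right].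
  + have := NK0 _ _ _ _ _ y j W hj; rewrite ho hc => /(_ isT) [/esym|[]] X;
      [by apply: Ha; left| by apply: Hb; right; left| by apply: Hb; right; right].
- case ho: (odd j).
  + have := NK0 _ _ _ _ _ y j W hj; rewrite ho hc => /(_ isT) [/esym|[]] X;
      [by apply: Ha; left| by apply: Hb; right; left| by apply: Hb; right; right].
  + have := NK0 _ _ _ _ _ y (2*k+1-j)%N Wr ltac:(lia).
    rewrite rj ra rb hc.
    have -> : odd (2*k+1-j) = true.
      by rewrite oddB ?ho ?oddD ?oddM //; lia.
    move=> /(_ isT) [/esym|[]] X; [by apply: Hb; left| by apply: Ha; right; left| by apply: Ha; right; right].
Qed.

Lemma sameEdge_sym (f e : T * T) : sameEdge f e = sameEdge e f.
Proof.
rewrite /sameEdge (eq_sym f.1 e.1) (eq_sym f.2 e.2) (eq_sym f.1 e.2) (eq_sym f.2 e.1).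
by case: (e.1 == f.1); case: (e.2 == f.2); case: (e.2 == f.1); case: (e.1 == f.2).
Qed.

Lemma sameEdge_pred (f e : T * T) (Q : pred T) : sameEdge f e -> Q f.1 -> Q f.2 -> Q e.1 && Q e.2.
Proof.
by rewrite /sameEdge => /orP [/andP[/eqP-> /eqP->]|/andP[/eqP-> /eqP->]] -> ->.
Qed.

Lemma ec_mono G es y u v : even_connected (del_cnbhd G y) [seq e <- es | del_cnbhd G y e.1 e.2] u v ->
  even_connected G es u v.
Proof.
move/ecP=> [p [k [[h1 h2 h3 h4 h5] h6 h7]]]; apply/ecP; exists p, k; split=> //; split=> //.
- by move=> r hr; have /and3P[] := h3 r hr.
- move=> l hl; have /hasP[e] := h4 l hl; rewrite mem_filter => /andP[_ he] hs.
  by apply/hasP; exists e.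
- move=> f; apply: leq_trans (h5 f) _.
  by rewrite count_filter; apply: sub_count => e /andP[].
Qed.

Lemma transfer G es y p k x0 : all (fun e => G e.1 e.2) es -> wk G es p k x0 ->
  (forall j, (j <= 2*k+1)%N -> ~~ cnbhd G y (nth x0 p j)) ->
  wk (del_cnbhd G y) [seq e <- es | del_cnbhd G y e.1 e.2] p k x0.
Proof.
move=> hall [h1 h2 h3 h4 h5] hN.
have Q l : (l < k)%N -> ~~ cnbhd G y (pr x0 p l).1 && ~~ cnbhd G y (pr x0 p l).2.
  by move=> hl; rewrite /= !hN //; lia.
have Pe f e : e \in es -> sameEdge f e -> ~~ cnbhd G y f.1 && ~~ cnbhd G y f.2 ->
    del_cnbhd G y e.1 e.2.
  move=> ein hs /andP[q1 q2].
  have /andP[r1 r2] := sameEdge_pred _ _ (fun x => ~~ cnbhd G y x) hs q1 q2.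
  by rewrite /del_cnbhd r1 r2 (allP hall e ein).
split=> //.
- by move=> r hr; rewrite /del_cnbhd h3 // !hN //; lia.
- move=> l hl; have /hasP[e ein hs] := h4 l hl.
  by apply/hasP; exists e => //; rewrite mem_filter ein (Pe _ _ ein hs (Q l hl)).
- move=> f.
  case hh: (has (sameEdge f) [seq pr x0 p l | l <- iota 0 k]); last first.
    by move: hh; rewrite has_count; case: (count _ _).
  move/hasP: hh => [x /mapP [l]]; rewrite mem_iota => /andP[_ hl] -> hs.
  have hf : ~~ cnbhd G y f.1 && ~~ cnbhd G y f.2.
    have /andP[q1 q2] := Q l hl.
    by apply: (sameEdge_pred _ _ (fun x => ~~ cnbhd G y x)) q1 q2; rewrite sameEdge_sym.
  rewrite count_filter [in X in (_ <= X)%N](@eq_in_count _ _ (sameEdge f)); first exact: h5.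
  move=> e ein /=; case hse: (sameEdge f e) => //=.
  exact: (Pe _ _ ein hse hf).
Qed.
End S.

Theorem lemma4p5 (T : finType) (G : rel T) (h : nat) (xs ys : 'I_h -> T)
    (s : nat) (es : seq (T * T)) (y : T) :
  simple_graph G ->
  very_well_covered G ->
  (forall u : T, exists i : 'I_h, u = xs i \/ u = ys i) ->
  injective xs -> injective ys -> (forall i j, xs i <> ys j) ->
  min_vertex_cover G [set xs i | i : 'I_h] ->
  max_independent G [set ys i | i : 'I_h] ->
  (forall i, G (xs i) (ys i)) ->
  (1 <= s)%N -> size es = s -> all (fun e => G e.1 e.2) es ->
  induced_sub
    (del_cnbhdP (assoc_graph G es) (inl y))
    (assoc_graph (del_cnbhd G y)
       [seq e <- es | del_cnbhd G y e.1 e.2]).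
Proof.
move=> [sG iG] _ _ _ _ _ _ _ _ _ _ hall.
have noN u : (inl u : T + T) <> inl y /\ ~ assoc_graph G es (inl y) (inl u) ->
    ~ (u = y \/ G y u \/ even_connected G es y u).
  move=> [h1 h2] [e|[e|e]]; first by apply: h1; rewrite e.
    apply: h2; split; last by left.
    by move=> yu; rewrite yu iG in e.
  apply: h2; split; last by right.
  by move=> yu; apply: h1; rewrite yu.
have noN' u : ~ (u = y \/ G y u \/ even_connected G es y u) -> ~~ cnbhd G y u.
  by move=> H; apply/negP => /orP[/eqP e|e]; apply: H; [left|right; left].
have key u v : ~ (u = y \/ G y u \/ even_connected G es y u) ->
    ~ (v = y \/ G y v \/ even_connected G es y v) ->
    even_connected G es u v ->
    even_connected (del_cnbhd G y) [seq e <- es | del_cnbhd G y e.1 e.2] u v.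
  move=> Hu Hv /ecP [p [k [W h0 h1]]]; apply/ecP; exists p, k; split=> //.
  apply: (transfer _ _ _ _ _ _ _ hall W).
  by apply: (avoid _ _ _ _ _ _ _ sG W); rewrite ?h0 ?h1.
split.
- move=> [u|u] [v|v] //= [hab [ha hb]].
  + have Hu := noN u ha; have Hv := noN v hb.
    case: hab => neq [e|e]; split=> //; [left|right].
      by rewrite /del_cnbhd e !noN'.
    exact: key.
  + have Hu := noN u ha.
    by case: hab => e ec; subst v; split=> //; apply: key.
  + have Hv := noN v hb.
    by case: hab => e ec; subst v; split=> //; apply: key.
  + by case: hab.
- move=> a b [c Kac] [d Kbd] hab; have ha := Kac.2.1; have hb := Kbd.2.1; split; [|split; [exact: ha|exact: hb]].
  case: a b hab {ha hb Kac Kbd} => [u|u] [v|v] //=.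
  + move=> [neq [e|e]]; split=> //; [left|right].
      by move: e => /and3P[].
    exact: (ec_mono _ _ _ _ _ _ e).
  + by move=> [e ec]; split=> //; apply: (ec_mono _ _ _ _ _ _ ec).
  + by move=> [e ec]; split=> //; apply: (ec_mono _ _ _ _ _ _ ec).
Qed.
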